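(* Let $p\ge1$ be an integer, let $N$ be a $p$-rooted almost-binary phylogenetic network on $X$, let $\mathcal{Z}=\{Z_1,\dots,Z_d\}$ be the set of maximal zig-zag trails of $N$ (whose edge-sets partition $E(N)$), and let $\mathcal{X}\in\{\mathcal{A},\mathcal{B},\mathcal{C}\}$. Then: (1) The map $S\mapsto (V(N),S)$ is a one-to-one correspondence between the family of $\mathcal{X}$-admissible subsets $S$ of $E(N)$ and the family $\mathcal{X}_N$ of support networks of $N$. (2) For $S\subseteq E(N)$, the spanning subgraph $(V(N),S)$ belongs to $\mathcal{X}_N$ if and only if $S\cap E(Z_i)$ is an $\mathcal{X}$-admissible subset of $E(Z_i)$ for every $i\in[1,d]$. (3) Identifying support networks with their edge-sets, $\mathcal{X}_N=\prod_{i=1}^d \mathcal{S}_{\mathcal{X}}(Z_i)$ (i.e., $\mathcal{X}_N=\{S_1\cup\dots\cup S_d : S_i\in\mathcal{S}_{\mathcal{X}}(Z_i)\}$), for any ordering $(Z_1,\dots,Z_d)$ of $\mathcal{Z}$. (4) $|\mathcal{X}_N|=\prod_{i=1}^d|\mathcal{S}_{\mathcal{X}}(Z_i)|$.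
   Context: A $p$-rooted almost-binary phylogenetic network on a non-empty finite set $X$ is a finite simple directed acyclic graph $N$ with exactly $p$ vertices of in-degree $0$ and out-degree $1$ or $2$ (roots), whose set of vertices of in-degree $1$ and out-degree $0$ is exactly $X$ (leaves), and every other vertex has in-degree and out-degree in $\{1,2\}$. A zig-zag trail is a connected subgraph $Z$ of $N$ with $m\ge1$ edges admitting an ordering $(e_1,\dots,e_m)$ of $E(Z)$ with $\mathrm{head}(e_i)=\mathrm{head}(e_{i+1})$ or $\mathrm{tail}(e_i)=\mathrm{tail}(e_{i+1})$ for all $i\in[1,m-1]$; it is maximal if not properly contained in another zig-zag trail. A support network of $N$ is a spanning subgraph $G$ of $N$ (i.e., $V(G)=V(N)$) that is itself a $p$-rooted almost-binary phylogenetic network on $X$; it is minimal if no support network of $N$ is a proper subgraph of $G$, and minimum if it has the minimum number of edges among all support networks of $N$. $\mathcal{A}_N,\mathcal{B}_N,\mathcal{C}_N$ denote the families of all, minimal, and minimum support networks of $N$, respectively. For a subgraph $Z$ of $N$, a subset $S\subseteq E(Z)$ is $\mathcal{A}$-admissible if (C1) every edge $(u,v)\in E(Z)$ with $\mathrm{outdeg}_N(u)=1$ or $\mathrm{indeg}_N(v)=1$ lies in $S$, and (C2) for any two distinct edges $e_1,e_2\in E(Z)$ with $\mathrm{tail}(e_1)=\mathrm{tail}(e_2)$ or $\mathrm{head}(e_1)=\mathrm{head}(e_2)$, at least one of $e_1,e_2$ lies in $S$. An $\mathcal{A}$-admissible $S$ is $\mathcal{B}$-admissible if no proper subset of $S$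 is $\mathcal{A}$-admissible, and $\mathcal{C}$-admissible if it has minimum cardinality among all $\mathcal{A}$-admissible subsets of $E(Z)$. $\mathcal{S}_{\mathcal{X}}(Z)$ denotes the family of $\mathcal{X}$-admissible subsets of $E(Z)$. *)

(* Defs.v *)
From mathcomp Require Import all_boot.
Set Implicit Arguments. Unset Strict Implicit. Unset Printing Implicit Defensive.

(* A directed graph on the finite vertex type V is given by its edge set
   E : {set V * V}; an edge (u,v) has tail u = e.1 and head v = e.2.
   Subgraphs / spanning subgraphs are identified with edge subsets. *)

Section Net.
Variable V : finType.
Implicit Types (E F S : {set V * V}) (X : {set V}).

Definition edge_rel E : rel V := fun u v => (u, v) \in E.
Definition indeg E v := #|[set e in E | e.2 == v]|.
Definition outdeg E u := #|[set e in E | e.1 == u]|.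

Definition acyclicb E :=
  [forall u, forall v, ((u, v) \in E) ==> ~~ connect (edge_rel E) v u].

Definition in12 (n : nat) := (n == 1) || (n == 2).
Definition is_root E v := (indeg E v == 0) && in12 (outdeg E v).
Definition is_leaf E v := (indeg E v == 1) && (outdeg E v == 0).

(* p-rooted almost-binary phylogenetic network on X, vertex set = all of V *)
Definition is_network (p : nat) X E :=
  [&& acyclicb E, X != set0,
      #|[set v | is_root E v]| == p,
      [set v | is_leaf E v] == X &
      [forall v, [|| is_root E v, is_leaf E v |
                   in12 (indeg E v) && in12 (outdeg E v)]]].

Inductive kind := KA | KB | KC.

Definition suppA (p : nat) X E : {set {set V * V}} :=
  [set S : {set V * V} | (S \subset E) && is_network p X S].
Definition supp_family (p : nat) X E (k : kind) : {set {set V * V}} :=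
  match k with
  | KA => suppA p X E
  | KB => [set S in suppA p X E |
             [forall S' : {set V * V}, (S' \proper S) ==> (S' \notin suppA p X E)]]
  | KC => [set S in suppA p X E |
             [forall S' : {set V * V}, (S' \in suppA p X E) ==> (#|S| <= #|S'|)]]
  end.

Definition zz_rel : rel (V * V) := fun e1 e2 => (e1.2 == e2.2) || (e1.1 == e2.1).
Definition is_zigzag E F : Prop :=
  F \subset E /\
  exists s : seq (V * V), [/\ s != [::], uniq s, (forall e, (e \in s) = (e \in F))
                             & sorted zz_rel s].
Definition max_zigzag E F : Prop :=
  is_zigzag E F /\ (forall F', is_zigzag E F' -> F \subset F' -> F' = F).

(* A-admissible subsets S of E(Z) (F = E(Z)); degrees are taken in N *)
Definition admA E F S :=
  [&& S \subset F,
      [forall e in F, ((outdeg E e.1 == 1) || (indeg E e.2 == 1)) ==> (e \in S)] &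
      [forall e1 in F, forall e2 in F,
         ((e1 != e2) && ((e1.1 == e2.1) || (e1.2 == e2.2))) ==>
         ((e1 \in S) || (e2 \in S))]].
Definition adm_family E F (k : kind) : {set {set V * V}} :=
  match k with
  | KA => [set S : {set V * V} | admA E F S]
  | KB => [set S : {set V * V} | admA E F S &&
             [forall S' : {set V * V}, (S' \proper S) ==> ~~ admA E F S']]
  | KC => [set S : {set V * V} | admA E F S &&
             [forall S' : {set V * V}, admA E F S' ==> (#|S| <= #|S'|)]]
  end.

End Net.

(* Main.v *)
Require Import Defs.
From mathcomp Require Import all_boot.
From Stdlib Require Import Classical.
Set Implicit Arguments. Unset Strict Implicit. Unset Printing Implicit Defensive.


Section Deg.
Variable V : finType.
Implicit Types (E S : {set V * V}).

Definition degp (pi : V * V -> V) E v := #|[set e in E | pi e == v]|.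

Lemma three_le (D : {set V * V}) a b c :
  a \in D -> b \in D -> c \in D -> a != b -> a != c -> b != c -> 3 <= #|D|.
Proof.
move=> aD bD cD ab ac bc.
have -> : 3 = #|a |: (b |: [set c])|.
  rewrite !cardsU1 cards1 !inE (negbTE ab) (negbTE ac) (negbTE bc) //.
apply: subset_leq_card; apply/subsetP=> x; rewrite !inE.
by case/or3P=> /eqP->.
Qed.

Lemma degp_sub pi S E v : S \subset E -> degp pi S v <= degp pi E v.
Proof.
move=> sSE; apply: subset_leq_card; apply/subsetP=> e; rewrite !inE.
by case/andP=> /(subsetP sSE) -> ->.
Qed.

Lemma cov_iff pi S E v : S \subset E -> degp pi E v <= 2 ->
 (degp pi E v != 0 -> degp pi S v != 0) <->
 ((forall e, e \in E -> pi e = v -> degp pi E v = 1 -> e \in S) /\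
  (forall e1 e2, e1 \in E -> e2 \in E -> e1 != e2 -> pi e1 = v -> pi e2 = v ->
      (e1 \in S) || (e2 \in S))).
Proof.
rewrite /degp => sSE le2; set D := [set e in E | pi e == v].
have inS f : f \in [set e in S | pi e == v] -> f \in S /\ f \in D.
  by rewrite !inE => /andP[fS ->]; rewrite (subsetP sSE).
split.
- move=> H; split.
  + move=> e eE pe D1; have /set0Pn[f /inS[fS fD]] : [set e in S | pi e == v] != set0.
      by rewrite -cards_eq0 H // D1.
    have eD : e \in D by rewrite inE eE pe eqxx.
    have [x Dx] := cards1P (introT eqP D1); move: eD fD; rewrite Dx !inE => /eqP-> /eqP<-//.
  + move=> e1 e2 e1E e2E n12 p1 p2.
    have e1D : e1 \in D by rewrite inE e1E p1 eqxx.
    have e2D : e2 \in D by rewrite inE e2E p2 eqxx.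
    have /set0Pn[f /inS[fS fD]] : [set e in S | pi e == v] != set0.
      have : #|D| != 0 by rewrite cards_eq0; apply/set0Pn; exists e1.
      by move/H; rewrite cards_eq0.
    case: (f =P e1) => [<-|f1]; first by rewrite fS.
    case: (f =P e2) => [<-|f2]; first by rewrite fS orbT.
    have := three_le e1D e2D fD n12 (introN eqP (nesym f1)) (introN eqP (nesym f2)).
    by rewrite ltnNge le2.
- move=> [H1 H2] Dn0; rewrite cards_eq0; apply/set0Pn.
  move: Dn0; rewrite cards_eq0 => /set0Pn[e]; rewrite inE => /andP[eE /eqP pe].
  case D1 : (#|D| == 1).
    by exists e; rewrite inE H1 ?pe ?eqxx //; apply/eqP.
  have : 0 < #|D :\ e|.
    rewrite (cardsD1 e D) inE eE pe eqxx /= in D1 *.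
    by rewrite lt0n; apply/negP => /eqP H0; move: D1; rewrite H0.
  move/card_gt0P=> [e' ]; rewrite !inE => /and3P[ne' e'E /eqP pe'].
  case/orP: (H2 e e' eE e'E (negbT (introF eqP (fun h => (negP ne') (introT eqP (esym h))))) pe pe') => H.
    by exists e; rewrite inE H pe eqxx.
  by exists e'; rewrite inE H pe' eqxx.
Qed.
End Deg.


Definition Rn a b := (a == 0) && in12 b.
Definition Ln a b := (a == 1) && (b == 0).
Definition Dn a b := [|| Rn a b, Ln a b | in12 a && in12 b].

Lemma nat_local x y x' y' : x' <= x -> y' <= y -> (x != 0 -> x' != 0) ->
  (y != 0 -> y' != 0) -> Dn x y ->
  [/\ Rn x' y' = Rn x y, Ln x' y' = Ln x y & Dn x' y'].
Proof.
rewrite /Dn /Rn /Ln /in12.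
case: x => [|[|[|x]]]; case: y => [|[|[|y]]] //=;
case: x' => [|[|[|x']]] //=; case: y' => [|[|[|y']]] //= => _ _ H1 H2; try (by move: (H1 isT)); try (by move: (H2 isT)).
Qed.

Lemma Dn_le2 x y : Dn x y -> x <= 2 /\ y <= 2.
Proof. by rewrite /Dn /Rn /Ln /in12; case: x => [|[|[|x]]]; case: y => [|[|[|y]]]. Qed.

Lemma Dn_R x y : Dn x y -> x = 0 -> Rn x y.
Proof. move=> + h; rewrite h /Dn /Rn /Ln /in12; by case: y => [|[|[|y]]]. Qed.
Lemma Dn_L x y : Dn x y -> y = 0 -> Ln x y.
Proof. move=> + h; rewrite h /Dn /Rn /Ln /in12; by case: x => [|[|[|x]]]. Qed.
Lemma Rn0 x y : Rn x y -> x = 0. Proof. by case/andP=> /eqP. Qed.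
Lemma Ln0 x y : Ln x y -> y = 0. Proof. by case/andP=> _ /eqP. Qed.

Section Net.
Variable V : finType.
Implicit Types (E S : {set V * V}) (X : {set V}).

Definition Cov E S := forall v, (indeg E v != 0 -> indeg S v != 0) /\
                                (outdeg E v != 0 -> outdeg S v != 0).

Lemma net_Dn p X E v : is_network p X E -> Dn (indeg E v) (outdeg E v).
Proof. by case/and5P=> _ _ _ _ /forallP/(_ v). Qed.

Lemma net_le2 p X E v : is_network p X E -> indeg E v <= 2 /\ outdeg E v <= 2.
Proof. by move/(net_Dn v)/Dn_le2. Qed.

Lemma net_sub_iff p X E S : is_network p X E -> S \subset E ->
  is_network p X S <-> Cov E S.
Proof.
move=> hE sSE; have hD := fun v => net_Dn v hE.
case/and5P: hE => acE X0 rootsE leavesE allE.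
have lein v : indeg S v <= indeg E v by exact: (degp_sub snd v sSE).
have leout v : outdeg S v <= outdeg E v by exact: (degp_sub fst v sSE).
split.
- case/and5P=> acS _ rootsS leavesS allS.
  have DS v : Dn (indeg S v) (outdeg S v) by move/forallP: allS => /(_ v).
  have sub : [set v | is_root E v] \subset [set v | is_root S v].
    apply/subsetP=> v; rewrite !inE => /Rn0 /eqP i0.
    apply: (Dn_R (DS v)); apply/eqP; rewrite -leqn0 (leq_trans (lein v)) //.
    by rewrite leqn0.
  have eqR : [set v | is_root E v] =i [set v | is_root S v].
    by apply/subset_cardP => //; rewrite (eqP rootsE) (eqP rootsS).
  move=> v; split.
  + move=> h; apply/eqP => h0; have RS := Dn_R (DS v) h0.
    have : v \in [set v | is_root S v] by rewrite inE.
    by rewrite -eqR inE => /Rn0 h1; rewrite h1 in h.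
  + move=> h; apply/eqP => h0; have LS := Dn_L (DS v) h0.
    have : v \in [set v | is_leaf S v] by rewrite inE.
    by rewrite (eqP leavesS) -(eqP leavesE) inE => /Ln0 h1; rewrite h1 in h.
- move=> cov.
  have L v := nat_local (lein v) (leout v) (proj1 (cov v)) (proj2 (cov v)) (hD v).
  apply/and5P; split => //.
  + apply/forallP=> u; apply/forallP=> w; apply/implyP=> uwS.
    move/forallP: acE => /(_ u) /forallP /(_ w) /implyP /(_ (subsetP sSE _ uwS)).
    apply: contra; apply: connect_sub => x y xyS; apply: connect1.
    exact: (subsetP sSE _ xyS).
  + rewrite -(eqP rootsE); apply/eqP; apply: eq_card => v; rewrite !inE.
    by case: (L v).
  + rewrite -(eqP leavesE); apply/eqP/setP => v; rewrite !inE.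
    by case: (L v).
  + by apply/forallP => v; case: (L v).
Qed.

Lemma adm_cov p X E S : is_network p X E ->
  admA E E S <-> S \subset E /\ Cov E S.
Proof.
move=> hE; split.
- case/and3P=> sSE /forallP C1 /forallP C2; split => // v; split.
  + change (degp snd E v != 0 -> degp snd S v != 0).
    apply: (proj2 (cov_iff (pi:=snd) (v:=v) sSE (proj1 (net_le2 v hE)))); split.
    * move=> e eE pe D1; have := C1 e; rewrite eE /= => /implyP; apply.
      by apply/orP; right; rewrite pe; apply/eqP.
    * move=> e1 e2 e1E e2E n12 p1 p2; have := C2 e1; rewrite e1E /= => /forallP /(_ e2).
      rewrite e2E /= => /implyP; apply; rewrite n12 /= p1 p2 eqxx orbT //.
  + change (degp fst E v != 0 -> degp fst S v != 0).
    apply: (proj2 (cov_iff (pi:=fst) (v:=v) sSE (proj2 (net_le2 v hE)))); split.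
    * move=> e eE pe D1; have := C1 e; rewrite eE /= => /implyP; apply.
      by apply/orP; left; rewrite pe; apply/eqP.
    * move=> e1 e2 e1E e2E n12 p1 p2; have := C2 e1; rewrite e1E /= => /forallP /(_ e2).
      rewrite e2E /= => /implyP; apply; rewrite n12 /= p1 p2 eqxx //.
- move=> [sSE cov].
  have ci v := proj1 (cov_iff (pi:=snd) (v:=v) sSE (proj1 (net_le2 v hE))) (proj1 (cov v)).
  have co v := proj1 (cov_iff (pi:=fst) (v:=v) sSE (proj2 (net_le2 v hE))) (proj2 (cov v)).
  apply/and3P; split => //.
  + apply/forallP=> e; apply/implyP=> eE; apply/implyP => /orP[]/eqP D1.
    * exact: (proj1 (co e.1)) eE erefl D1.
    * exact: (proj1 (ci e.2)) eE erefl D1.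
  + apply/forallP=> e1; apply/implyP=> e1E; apply/forallP=> e2; apply/implyP=> e2E.
    apply/implyP => /andP[n12 /orP[]/eqP h].
    * exact: (proj2 (co e1.1)) e1E e2E n12 erefl (esym h).
    * exact: (proj2 (ci e1.2)) e1E e2E n12 erefl (esym h).
Qed.

Lemma suppA_adm p X E : is_network p X E ->
  suppA p X E = [set S | admA E E S].
Proof.
move=> hE; apply/setP=> S; rewrite !inE.
apply/andP/idP.
- by case=> sSE /(net_sub_iff hE sSE) cov; apply/(adm_cov _ hE).
- by move/(adm_cov _ hE) => [sSE cov]; split => //; apply/(net_sub_iff hE sSE).
Qed.

Lemma supp_adm p X E k : is_network p X E ->
  supp_family p X E k = adm_family E E k.
Proof.
move=> hE; case: k => /=; rewrite ?(suppA_adm hE) //; apply/setP=> S; rewrite !inE.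
- congr (_ && _); apply: eq_forallb => S'; rewrite !inE //.
- congr (_ && _); apply: eq_forallb => S'; rewrite !inE //.
Qed.
End Net.


Section ZZ.
Variable V : finType.
Variable E : {set V * V}.
Local Notation zzr := (@zz_rel V).
Hypothesis hdeg : forall v, indeg E v <= 2 /\ outdeg E v <= 2.

Lemma zz_sym a b : zzr a b = zzr b a.
Proof. by rewrite /zz_rel eq_sym [b.1 == _]eq_sym. Qed.

Lemma share3 (pi : V * V -> V) x a b : degp pi E (pi x) <= 2 ->
  x \in E -> a \in E -> b \in E -> x != a -> x != b -> a != b ->
  pi x == pi a -> pi x == pi b -> False.
Proof.
move=> le2 xE aE bE xa xb ab ha hb.
have := @three_le _ [set e in E | pi e == pi x] x a b.
rewrite !inE xE aE bE eqxx eq_sym ha eq_sym hb => /(_ isT isT isT xa xb ab).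
by rewrite /degp in le2; rewrite ltnNge le2.
Qed.

Lemma deg3 x a b c : x \in E -> a \in E -> b \in E -> c \in E ->
  x != a -> x != b -> x != c -> a != b -> a != c -> b != c ->
  zzr x a -> zzr x b -> zzr x c -> False.
Proof.
move=> xE aE bE cE xa xb xc ab ac bc.
have h2 := proj1 (hdeg x.2); have h1 := proj2 (hdeg x.1).
rewrite /zz_rel => /orP[]ha /orP[]hb /orP[]hc;
  first [ exact: (share3 (pi:=snd) h2 xE aE bE xa xb ab ha hb)
        | exact: (share3 (pi:=snd) h2 xE aE cE xa xc ac ha hc)
        | exact: (share3 (pi:=snd) h2 xE bE cE xb xc bc hb hc)
        | exact: (share3 (pi:=fst) h1 xE aE bE xa xb ab ha hb)
        | exact: (share3 (pi:=fst) h1 xE aE cE xa xc ac ha hc)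
        | exact: (share3 (pi:=fst) h1 xE bE cE xb xc bc hb hc) ].
Qed.

Lemma ext_seq s x y : uniq s -> sorted zzr s -> {subset s <= E} ->
  y \in E -> y \notin s -> x \in s -> zzr x y ->
  exists s', [/\ uniq s', sorted zzr s' & forall e, (e \in s') = (e == y) || (e \in s)].
Proof.
move=> us ss sE yE yNs xs xy.
case/splitPr: xs us ss sE yNs => s1 s2 us ss sE yNs.
case: s2 us ss sE yNs => [|b s2] us ss sE yNs.
  exists (rcons (s1 ++ [:: x]) y); split.
  - by rewrite rcons_uniq yNs.
  - case: s1 us ss sE yNs => [|h t] /= us ss sE yNs; first by rewrite xy.
    by rewrite rcons_path ss last_cat /= xy.
  - by move=> e; rewrite mem_rcons inE.
case: s1 us ss sE yNs => [|a0 s1] us ss sE yNs.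
  exists (y :: x :: b :: s2); split.
  - by rewrite /= yNs.
  - by rewrite /= zz_sym xy.
  - by move=> e; rewrite inE.
exfalso.
move: ss; rewrite /= cat_path /= => /andP[_ /and3P[ax xbr _]].
set a := last a0 s1 in ax.
have aIn : a \in a0 :: s1 by exact: mem_last.
move: us; rewrite cat_uniq => /and3P[_ hN /andP[xN2 _]].
have xN1 : x \notin a0 :: s1.
  by apply: contra hN => xi; apply/hasP; exists x; rewrite ?inE ?eqxx.
have hN' : forall z, z \in b :: s2 -> z \notin a0 :: s1.
  move=> z zi; apply: contra hN => zi'; apply/hasP; exists z => //.
  by rewrite inE zi orbT.
have bIn : b \in b :: s2 by rewrite inE eqxx.
have ab : a != b.
  by apply/negP => /eqP abe; have := hN' b bIn; rewrite -abe aIn.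
have xa : x != a by apply: contraNneq xN1 => ->.
have xb : x != b by apply: contraNneq xN2 => ->; rewrite inE eqxx.
move: yNs; rewrite mem_cat !inE negb_or => /andP[yN1 /norP[yx /norP[yb _]]].
have ay : a != y by apply: contraNneq yN1 => <-.
have inE' z : z \in (a0 :: s1) ++ x :: b :: s2 -> z \in E := sE z.
apply: (@deg3 x a b y) => //.
- by apply: inE'; rewrite mem_cat; apply/orP; right; rewrite mem_head.
- by apply: inE'; rewrite mem_cat aIn.
- by apply: inE'; rewrite mem_cat; apply/orP; right; rewrite !inE eqxx ?orbT.
- by rewrite eq_sym.
- by rewrite eq_sym.
- by rewrite zz_sym.
Qed.

Lemma zz_add F x y : is_zigzag E F -> y \in E -> x \in F -> zzr x y ->
  is_zigzag E (y |: F).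
Proof.
move=> [sFE [s [sn us sF ss]]] yE xF xy.
case yF : (y \in F).
  have -> : y |: F = F by apply/setUidPr; rewrite sub1set yF.
  by split => //; exists s.
have sE : {subset s <= E} by move=> e; rewrite sF => /(subsetP sFE).
have yNs : y \notin s by rewrite sF yF.
have xs : x \in s by rewrite sF.
have [s' [us' ss' hs']] := ext_seq us ss sE yE yNs xs xy.
split; first by rewrite subUset sub1set yE sFE.
exists s'; split => //.
- by apply/eqP => s0; have := hs' y; rewrite s0 eqxx.
- by move=> e; rewrite hs' !inE sF.
Qed.

Lemma cross (P : pred (V * V)) s a b : sorted zzr s -> a \in s -> P a ->
  b \in s -> ~~ P b -> exists x y, [/\ x \in s, y \in s, P x, ~~ P y & zzr x y].
Proof.
elim: s a b => // h t IH a b ss aIn Pa bIn Pb.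
case: t IH ss aIn bIn => [|h' t] IH ss aIn bIn.
  by move: aIn bIn Pa Pb; rewrite !inE => /eqP-> /eqP-> ->.
move: (ss); rewrite /= => /andP[hh' ss'].
case: (boolP (P h)) => Ph; case: (boolP (P h')) => Ph'.
- move: Pb; rewrite -[b \in _]/((b == h) || (b \in h' :: t)) in bIn.
  case/orP: bIn => [/eqP->|bIn] Pb; first by rewrite Ph in Pb.
  have [x [y [xi yi Px Py xy]]] := IH h' b ss' (mem_head _ _) Ph' bIn Pb.
  by exists x, y; split => //; rewrite in_cons ?xi ?yi orbT.
- by exists h, h'; rewrite !inE !eqxx !orbT.
- by exists h', h; rewrite !inE !eqxx !orbT zz_sym.
- move: Pa; rewrite -[a \in _]/((a == h) || (a \in h' :: t)) in aIn.
  case/orP: aIn => [/eqP->|aIn] Pa; first by rewrite Pa in Ph.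
  have [x [y [xi yi Px Py xy]]] := IH a h' ss' aIn Pa (mem_head _ _) Ph'.
  by exists x, y; split => //; rewrite in_cons ?xi ?yi orbT.
Qed.

Lemma zz_union F2 : is_zigzag E F2 -> forall n F1, #|F2 :\: F1| <= n ->
  is_zigzag E F1 -> (exists a, (a \in F1) && (a \in F2)) -> is_zigzag E (F1 :|: F2).
Proof.
move=> [sF2E [s2 [sn2 us2 sF2 ss2]]] n.
elim: n => [|n IH] F1 hn z1 [a /andP[aF1 aF2]].
  move: hn; rewrite leqn0 cards_eq0 setD_eq0 => /setUidPl->; exact: z1.
case: (boolP (F2 \subset F1)) => [/setUidPl->//|/subsetPn[b bF2 bF1]].
have as2 : a \in s2 by rewrite sF2 aF2.
have bs2 : b \in s2 by rewrite sF2 bF2.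
have [x [y [xi yi Px Py xy]]] := cross (P := fun e => e \in F1) ss2 as2 aF1 bs2 bF1.
have yF2 : y \in F2 by rewrite -sF2.
have z1' := zz_add z1 (subsetP sF2E _ yF2) Px xy.
have -> : F1 :|: F2 = (y |: F1) :|: F2.
  by apply/setP => e; rewrite !inE; case: (e =P y) => // ->; rewrite yF2 !orbT.
apply: IH z1' _; last by exists a; rewrite !inE aF1 aF2 orbT.
have : #|F2 :\: F1| = (#|(F2 :\: F1) :\ y|).+1.
  by rewrite (cardsD1 y (F2 :\: F1)) !inE yF2 Py.
move=> h; rewrite h ltnS in hn; apply: leq_trans hn; apply: subset_leq_card.
apply/subsetP => e; rewrite !inE negb_or => /andP[/andP[-> ->] ->]. done.
Qed.

End ZZ.


Section Max.
Variable V : finType.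
Variable E : {set V * V}.
Local Notation zzr := (@zz_rel V).
Hypothesis hdeg : forall v, indeg E v <= 2 /\ outdeg E v <= 2.

Lemma zz_single e : e \in E -> is_zigzag E [set e].
Proof.
move=> eE; split; first by rewrite sub1set.
by exists [:: e]; split => // f; rewrite !inE.
Qed.

Lemma zz_ne F : is_zigzag E F -> exists e, e \in F.
Proof.
move=> [_ [[|x s] [sn _ sF _]]] //; exists x; by rewrite -sF mem_head.
Qed.

Lemma max_exists F : is_zigzag E F -> exists M, max_zigzag E M /\ F \subset M.
Proof.
suff : forall n F, #|~: F| < n -> is_zigzag E F -> exists M, max_zigzag E M /\ F \subset M.
  by move=> H zF; apply: (H #|~: F|.+1).
elim=> // n IH F0 hn zF.
case: (classic (exists F', is_zigzag E F' /\ F0 \proper F')) => [[F' [zF' pF]]|nex].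
  have [M [mM sM]] : exists M, max_zigzag E M /\ F' \subset M.
    apply: IH zF'; rewrite -ltnS; apply: leq_trans hn; rewrite ltnS.
    by apply: proper_card; rewrite properC.
  by exists M; split => //; apply: subset_trans sM; apply: proper_sub.
exists F0; split => //; split => // F' zF' sF.
apply/eqP; rewrite eq_sym; apply/negPn/negP => ne; apply: nex; exists F'; split => //.
by rewrite properEneq ne.
Qed.

Lemma max_eq M1 M2 e : max_zigzag E M1 -> max_zigzag E M2 -> e \in M1 -> e \in M2 -> M1 = M2.
Proof.
move=> [z1 m1] [z2 m2] e1 e2.
have zU := zz_union hdeg z2 (leqnn _) z1 (ex_intro _ e (introT andP (conj e1 e2))).
have h1 := m1 _ zU (subsetUl _ _).
have h2 := m2 _ zU (subsetUr _ _).
by rewrite -h1 h2.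
Qed.

Lemma max_closed M e f : max_zigzag E M -> e \in M -> f \in E -> zzr e f -> f \in M.
Proof.
move=> [zM mM] eM fE ef.
have := mM _ (zz_add hdeg zM fE eM ef) (subsetUr _ _).
by move=> h; rewrite -h !inE eqxx.
Qed.

Variable Zs : {set {set V * V}}.
Hypothesis hZ : forall F, F \in Zs <-> max_zigzag E F.

Lemma Zs_sub F : F \in Zs -> F \subset E.
Proof. by move/hZ => [[]]. Qed.

Lemma Zs_cover e : e \in E -> exists F, F \in Zs /\ e \in F.
Proof.
move=> eE; have [M [mM sM]] := max_exists (zz_single eE).
by exists M; split; [apply/hZ | rewrite (subsetP sM) // inE].
Qed.

Lemma Zs_disj F G e : F \in Zs -> G \in Zs -> e \in F -> e \in G -> F = G.
Proof. by move=> /hZ hF /hZ hG; apply: max_eq. Qed.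

Lemma Zs_closed F e f : F \in Zs -> e \in F -> f \in E -> zzr e f -> f \in F.
Proof. by move=> /hZ; apply: max_closed. Qed.

Lemma Zs_partition : partition Zs E.
Proof.
apply/and3P; split.
- rewrite eqEsubset; apply/andP; split.
  + by apply/bigcupsP => F /Zs_sub.
  + apply/subsetP => e /Zs_cover [F [FZ eF]]; apply/bigcupP; by exists F.
- apply/trivIsetP => F G FZ GZ nFG; rewrite -setI_eq0; apply/eqP/setP => e.
  rewrite !inE; apply/negP => /andP[eF eG]; by rewrite (Zs_disj FZ GZ eF eG) eqxx in nFG.
- apply/negP => /hZ [/zz_ne [e]]; by rewrite inE.
Qed.
End Max.


Section Dec.
Variable V : finType.
Variable E : {set V * V}.
Local Notation zzr := (@zz_rel V).
Hypothesis hdeg : forall v, indeg E v <= 2 /\ outdeg E v <= 2.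
Variable Zs : {set {set V * V}}.
Hypothesis hZ : forall F, F \in Zs <-> max_zigzag E F.
Implicit Types (S T F G : {set V * V}).

Lemma adm_sub F T : admA E F T -> T \subset F.
Proof. by case/and3P. Qed.

Lemma local S : admA E E S <-> S \subset E /\ (forall F, F \in Zs -> admA E F (S :&: F)).
Proof.
split.
- case/and3P=> sSE /forallP C1 /forallP C2; split => // F FZ.
  have sFE := Zs_sub hZ FZ.
  apply/and3P; split; first exact: subsetIr.
  + apply/forallP => e; apply/implyP => eF; apply/implyP => h.
    have := C1 e; rewrite (subsetP sFE _ eF) /= h /= => eS; by rewrite inE eS eF.
  + apply/forallP => e1; apply/implyP => e1F; apply/forallP => e2; apply/implyP => e2F.
    apply/implyP => h; have := C2 e1; rewrite (subsetP sFE _ e1F) /= => /forallP /(_ e2).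
    rewrite (subsetP sFE _ e2F) /= h /= !inE e1F e2F !andbT //.
- move=> [sSE H]; apply/and3P; split => //.
  + apply/forallP => e; apply/implyP => eE; apply/implyP => h.
    have [F [FZ eF]] := Zs_cover hZ eE.
    case/and3P: (H F FZ) => _ /forallP /(_ e); rewrite eF h /= inE => /andP[] //.
  + apply/forallP => e1; apply/implyP => e1E; apply/forallP => e2; apply/implyP => e2E.
    apply/implyP => /andP[n12 h].
    have [F [FZ e1F]] := Zs_cover hZ e1E.
    have e2F : e2 \in F.
      by apply: (Zs_closed hdeg hZ FZ e1F e2E); rewrite /zz_rel orbC.
    case/and3P: (H F FZ) => _ _ /forallP /(_ e1); rewrite e1F /= => /forallP /(_ e2).
    rewrite e2F n12 h /= !inE => /orP[] /andP[-> _]; rewrite ?orbT //.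
Qed.

Definition repl S F T := (S :\: F) :|: T.

Lemma repl_I S F G T : F \in Zs -> G \in Zs -> T \subset F ->
  repl S F T :&: G = if G == F then T else S :&: G.
Proof.
move=> FZ GZ sTF; apply/setP => e; rewrite /repl.
case: (G =P F) => [->|nGF]; rewrite !inE.
- case eT : (e \in T); first by rewrite (subsetP sTF _ eT) orbT.
  by rewrite orbF; case: (e \in F); rewrite ?andbF.
- case eG : (e \in G); rewrite ?andbF ?andbT //.
  case eF : (e \in F).
    by have := Zs_disj hdeg hZ GZ FZ eG eF.
  by rewrite /= orbC; case eT : (e \in T) => //; rewrite (subsetP sTF _ eT) in eF.
Qed.

Lemma repl_adm S F T : admA E E S -> F \in Zs -> admA E F T -> admA E E (repl S F T).
Proof.
move=> /local [sSE H] FZ aT; apply/local; split.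
- rewrite subUset (subset_trans (subsetDl _ _) sSE) /=.
  exact: subset_trans (adm_sub aT) (Zs_sub hZ FZ).
- move=> G GZ; rewrite repl_I ?(adm_sub aT) //.
  by case: (G =P F) => [->|]; [exact: aT| move=> _; exact: H].
Qed.

Lemma card_sum S : S \subset E -> #|S| = \sum_(F in Zs) #|S :&: F|.
Proof.
move=> sSE.
have -> : #|S| = \sum_(x in E | x \in S) 1.
  rewrite sum1dep_card; apply: eq_card => x; rewrite !inE.
  by case xS : (x \in S); rewrite ?andbF ?andbT ?(subsetP sSE _ xS).
erewrite set_partition_big_cond; last exact: (Zs_partition hdeg hZ).
apply: eq_bigr => F _; rewrite sum1dep_card; apply: eq_card => x; rewrite !inE andbC //.
Qed.

Lemma dec S k : S \subset E ->
  (S \in adm_family E E k <-> forall F, F \in Zs -> S :&: F \in adm_family E F k).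
Proof.
move=> sSE; case: k => /=.
- rewrite inE; split.
  + by move/local => [_ H] F FZ; rewrite inE; apply: H.
  + by move=> H; apply/local; split => // F FZ; move: (H F FZ); rewrite inE.
- rewrite inE; split.
  + case/andP => aS /forallP mS F FZ; rewrite inE.
    apply/andP; split; first by case/local: aS => _; apply.
    apply/forallP => T; apply/implyP => pT; apply/negP => aT.
    have sTF : T \subset F by apply: adm_sub aT.
    have := mS (repl S F T); rewrite repl_adm //=.
    suff -> : repl S F T \proper S by [].
    move: pT; rewrite properEneq => /andP[nT sT].
    rewrite properEneq; apply/andP; split.
    * move: nT; apply: contra => /eqP ST; apply/eqP/setP => e.
      have eTF : e \in T -> e \in F by move/(subsetP sTF).
      move/setP: ST => /(_ e); rewrite /repl !inE; move: eTF.
      case: (e \in T); case: (e \in F); case: (e \in S) => //= H; by move: (H isT).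
    * rewrite subUset subsetDl /=; apply: subset_trans sT (subsetIl _ _).
  + move=> H; apply/andP; split.
    * apply/local; split => // F FZ; have := H F FZ; rewrite inE => /andP[] //.
    * apply/forallP => S'; apply/implyP => pS; apply/negP => aS'.
      move: (pS); rewrite properEneq => /andP[nS sS].
      have [e eS eS'] : exists2 e, e \in S & e \notin S'.
        apply/exists_inP; move: nS; apply: contraR; rewrite negb_exists_in.
        move/forall_inP => h; rewrite eqEsubset sS /=; apply/subsetP => x xS.
        by have := h x xS; rewrite negbK.
      have [F [FZ eF]] := Zs_cover hZ (subsetP sSE _ eS).
      have := H F FZ; rewrite inE => /andP[_ /forallP /(_ (S' :&: F))].
      case/local: aS' => _ /(_ F FZ) ->.
      suff -> : S' :&: F \proper S :&: F by [].
      rewrite properEneq (setSI _ sS) andbT; apply/negP => /eqP h.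
      have : e \in S :&: F by rewrite inE eS eF.
      by rewrite -h inE (negbTE eS').
- rewrite inE; split.
  + case/andP => aS /forallP mS F FZ; rewrite inE.
    apply/andP; split; first by case/local: aS => _; apply.
    apply/forallP => T; apply/implyP => aT.
    have sTF : T \subset F by apply: adm_sub aT.
    have := mS (repl S F T); rewrite repl_adm // /= => le.
    have := (leq_card_setU (S :\: F) T).1; rewrite -/(repl S F T) => le2.
    have := leq_trans le le2; by rewrite -{1}(cardsID F S) (addnC #|S :\: F|) leq_add2r.
  + move=> H; apply/andP; split.
    * apply/local; split => // F FZ; have := H F FZ; rewrite inE => /andP[] //.
    * apply/forallP => S'; apply/implyP => aS'.
      have sS'E := adm_sub aS'.
      rewrite (card_sum sSE) (card_sum sS'E); apply: leq_sum => F FZ.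
      have := H F FZ; rewrite inE => /andP[_ /forallP /(_ (S' :&: F))].
      by case/local: aS' => _ /(_ F FZ) ->.
Qed.

Lemma fam_sub F k S : S \in adm_family E F k -> S \subset F.
Proof. case: k => /=; rewrite inE; [move=> h | case/andP=> h _ | case/andP=> h _]; exact: adm_sub h. Qed.

End Dec.


Section Prod.
Variable V : finType.
Variable E : {set V * V}.
Hypothesis hdeg : forall v, indeg E v <= 2 /\ outdeg E v <= 2.
Variable Zs : {set {set V * V}}.
Hypothesis hZ : forall F, F \in Zs <-> max_zigzag E F.
Variable d : nat.
Variable Z : 'I_d -> {set V * V}.
Hypothesis injZ : injective Z.
Hypothesis hZZ : forall F, F \in Zs <-> exists i, Z i = F.

Lemma ZZs i : Z i \in Zs.
Proof. by apply/hZZ; exists i. Qed.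

Lemma bigI (f : 'I_d -> {set V * V}) j : (forall i, f i \subset Z i) ->
  (\bigcup_(i < d) f i) :&: Z j = f j.
Proof.
move=> sf; apply/setP => e; rewrite inE; apply/andP/idP.
- case=> /bigcupP [i _ ei] ej.
  have ezi := subsetP (sf i) _ ei.
  have := Zs_disj hdeg hZ (ZZs i) (ZZs j) ezi ej => /injZ eij.
  by rewrite -eij.
- move=> ej; split; last exact: (subsetP (sf j)).
  by apply/bigcupP; exists j.
Qed.

Lemma prod_eq k : adm_family E E k =
  [set \bigcup_(i < d) S i | S : {ffun 'I_d -> {set V * V}}
                           & [forall i, S i \in adm_family E (Z i) k]].
Proof.
apply/setP => S; apply/idP/imsetP.
- move=> SA; have sSE := fam_sub SA.
  exists [ffun i => S :&: Z i].
    rewrite inE; apply/forallP => i; rewrite ffunE.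
    by apply: (proj1 (dec hdeg hZ k sSE) SA); exact: ZZs.
  apply/setP => e; apply/idP/bigcupP.
  + move=> eS; have [F [FZ eF]] := Zs_cover hZ (subsetP sSE _ eS).
    have [i ZiF] := proj1 (hZZ F) FZ.
    by exists i => //; rewrite ffunE inE eS ZiF.
  + by case=> i _; rewrite ffunE inE => /andP[].
- case=> f; rewrite inE => /forallP hf ->.
  have sf i : f i \subset Z i by apply: fam_sub (hf i).
  have sE : \bigcup_(i < d) f i \subset E.
    apply/bigcupsP => i _; apply: subset_trans (sf i) _.
    exact: (Zs_sub hZ (ZZs i)).
  apply/(dec hdeg hZ k sE) => F /hZZ [j <-].
  by rewrite bigI.
Qed.

Lemma prod_card k : #|adm_family E E k| = \prod_(i < d) #|adm_family E (Z i) k|.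
Proof.
rewrite prod_eq card_in_imset.
- rewrite (@eq_card _ _ (family (fun i => mem (adm_family E (Z i) k)))).
    rewrite card_family foldrE big_map big_enum /=.
    by apply: eq_bigr => i _.
  by move=> f; rewrite !inE; apply/forallP/familyP => h i; have := h i.
- move=> f g; rewrite !inE => /forallP hf /forallP hg efg.
  have sf i : f i \subset Z i by apply: fam_sub (hf i).
  have sg i : g i \subset Z i by apply: fam_sub (hg i).
  apply/ffunP => i; by rewrite -(bigI _ sf) -(bigI _ sg) efg.
Qed.
End Prod.

Unset Implicit Arguments.
Theorem theorem4p2 (V : finType) (p : nat) (X : {set V}) (E : {set V * V})
    (Zs : {set {set V * V}}) (k : kind) :
  1 <= p -> is_network p X E ->
  (forall F, F \in Zs <-> max_zigzag E F) ->
  [/\ partition Zs E,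
      (* (1) *) adm_family E E k = supp_family p X E k,
      (* (2) *) (forall S : {set V * V}, S \subset E ->
                   (S \in supp_family p X E k <->
                    (forall F, F \in Zs -> S :&: F \in adm_family E F k))),
      (* (3) *) (forall (d : nat) (Z : 'I_d -> {set V * V}), injective Z ->
                   (forall F, F \in Zs <-> exists i, Z i = F) ->
                   supp_family p X E k =
                   [set \bigcup_(i < d) S i | S : {ffun 'I_d -> {set V * V}}
                      & [forall i, S i \in adm_family E (Z i) k]])
    & (* (4) *) (forall (d : nat) (Z : 'I_d -> {set V * V}), injective Z ->
                   (forall F, F \in Zs <-> exists i, Z i = F) ->
                   #|supp_family p X E k| = \prod_(i < d) #|adm_family E (Z i) k|)].
Proof.
move=> _ hN hZ.
have hdeg : forall v, indeg E v <= 2 /\ outdeg E v <= 2 := fun v => net_le2 v hN.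
split.
- exact: (Zs_partition hdeg hZ).
- by rewrite (supp_adm _ hN).
- by move=> S sSE; rewrite (supp_adm _ hN); exact: dec.
- by move=> d Z injZ hZZ; rewrite (supp_adm _ hN); exact: prod_eq.
- by move=> d Z injZ hZZ; rewrite (supp_adm _ hN); exact: prod_card.
Qed.
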